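(* In the one-dimensional perturbed elephant random walk with stops, suppose $\epsilon+r\neq1$ and $\gamma=\frac{1+\epsilon r}{2}$. Then for all $t\ge1$ $$\mathbb{E}[X_t^2]=-\frac{t}{r(\epsilon+r)}-\frac{r\,\Gamma(t+1-\epsilon-r)}{(\epsilon+r)(\epsilon+r+\epsilon r)\Gamma(1-\epsilon-r)\Gamma(t)}+\frac{1}{\Gamma(1+\epsilon r)}\Big[\frac{1}{r(\epsilon+r)}+\frac{r}{(\epsilon+r)(\epsilon+r+\epsilon r)}\Big]\frac{\Gamma(t+1+\epsilon r)}{\Gamma(t)},$$ and hence $$\lim_{t\to\infty}\frac{\mathbb{E}[X_t^2]}{t^{1+\epsilon r}}=\frac{1}{\Gamma(1+\epsilon r)}\Big[\frac{1}{r(\epsilon+r)}+\frac{r}{(\epsilon+r)(\epsilon+r+\epsilon r)}\Big].$$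
   Context: One-dimensional perturbed elephant random walk with stops (perturbed ERWS): fix $p,q,r\in(0,1)$ with $p+q+r=1$, $\epsilon\in(0,1)$ and $s\in(0,1)$, and set $\gamma=p-q$. The steps $\sigma_1,\sigma_2,\dots$ take values in $\{-1,0,1\}$, $X_0=0$ and $X_t=\sigma_1+\dots+\sigma_t$. The first step satisfies $P(\sigma_1=1)=s$, $P(\sigma_1=-1)=1-s$. For $t\ge1$, conditionally on $\sigma_1,\dots,\sigma_t$, an index $k\in\{1,\dots,t\}$ is chosen uniformly at random. If $\sigma_k=\pm1$, then $\sigma_{t+1}=\sigma_k$ with probability $p$, $\sigma_{t+1}=-\sigma_k$ with probability $q$, and $\sigma_{t+1}=0$ with probability $r$. If $\sigma_k=0$, then $\sigma_{t+1}=1$ with probability $\epsilon/2$, $\sigma_{t+1}=-1$ with probability $\epsilon/2$, and $\sigma_{t+1}=0$ with probability $1-\epsilon$. *)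

(* Defs.v *)
From Stdlib Require Import Reals ZArith List ClassicalEpsilon.
Import ListNotations.
Open Scope R_scope.

(* Euler/Gauss product formula for the Gamma function:
   Gamma x = lim_{n->oo} n^x n! / (x (x+1) ... (x+n)),
   valid for every x that is not a non-positive integer. *)
Fixpoint rising_prod (x : R) (n : nat) : R :=
  match n with
  | O => x
  | S m => rising_prod x m * (x + INR (S m))
  end.

Definition gauss_seq (x : R) (n : nat) : R :=
  Rpower (INR (S n)) x * INR (fact (S n)) / rising_prod x (S n).

Definition Gamma (x : R) : R :=
  epsilon (inhabits 0) (fun l => Un_cv (gauss_seq x) l).

(* Perturbed ERWS. Steps are integers in {-1,0,1}. A history is a list of
   steps stored NEWEST FIRST: [sigma_t; ...; sigma_1]. *)

(* transition kernel: probability that the new step is b given that the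
   uniformly chosen remembered step is a *)
Definition K (p q r eps : R) (a b : Z) : R :=
  if Z.eqb a 0 then (if Z.eqb b 0 then 1 - eps else eps / 2)
  else if Z.eqb b a then p
  else if Z.eqb b (- a) then q
  else r.

Fixpoint histories (t : nat) : list (list Z) :=
  match t with
  | O => [ [] ]
  | S n => flat_map (fun h => map (fun b => b :: h) [(-1)%Z; 0%Z; 1%Z])
                    (histories n)
  end.

Fixpoint sumR (l : list R) : R :=
  match l with [] => 0 | x :: l' => x + sumR l' end.

Fixpoint prob (p q r eps s : R) (h : list Z) : R :=
  match h with
  | [] => 1
  | b :: h' =>
      match h' with
      | [] => if Z.eqb b 1 then s else if Z.eqb b (-1) then 1 - s else 0
      | _ :: _ =>
          prob p q r eps s h' *
          (sumR (map (fun a => K p q r eps a b) h') / INR (length h'))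
      end
  end.

Definition position (h : list Z) : R := IZR (fold_right Z.add 0%Z h).

Definition EX2 (p q r eps s : R) (t : nat) : R :=
  sumR (map (fun h => prob p q r eps s h * (position h) ^ 2) (histories t)).

(* Main.v *)
Require Import Defs.
From Stdlib Require Import Reals ZArith List ClassicalEpsilon Lra Lia.
From Coquelicot Require Import Coquelicot.
Open Scope R_scope.
Import ListNotations.

Lemma Gamma_unique x l : Un_cv (gauss_seq x) l -> Gamma x = l.
Proof.
  intro H. unfold Gamma.
  assert (E: exists l, Un_cv (gauss_seq x) l) by eauto.
  pose proof (epsilon_spec (inhabits 0) (fun l => Un_cv (gauss_seq x) l) E) as H2.
  exact (UL_sequence _ _ _ H2 H).
Qed.

Lemma rp_shift x m : x * rising_prod (x+1) m = rising_prod x m * (x + INR m + 1).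
Proof.
  induction m as [|m IH].
  - simpl. ring.
  - cbn [rising_prod]. rewrite <- Rmult_assoc, IH. rewrite !S_INR. ring.
Qed.

Lemma rp_pos x m : 0 < x -> 0 < rising_prod x m.
Proof.
  intro Hx. induction m as [|m IH]; cbn [rising_prod]; auto.
  apply Rmult_lt_0_compat; auto. pose proof (pos_INR (S m)); lra.
Qed.

Lemma rp_nz x m : -1 < x -> x <> 0 -> rising_prod x m <> 0.
Proof.
  intros H1 H2. induction m as [|m IH]; cbn [rising_prod]; auto.
  apply Rmult_integral_contrapositive_currified; auto. rewrite S_INR.
  pose proof (pos_INR m); lra.
Qed.

Lemma gauss_shift x n : -1 < x -> x <> 0 ->
  gauss_seq (x+1) n = gauss_seq x n * x * INR (S n) / (x + INR (S n) + 1).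
Proof.
  intros H1 H2. unfold gauss_seq.
  assert (P: 0 < INR (S n)) by (apply lt_0_INR; lia).
  rewrite Rpower_plus, Rpower_1 by auto.
  pose proof (rp_shift x (S n)) as E.
  assert (Hn: rising_prod x (S n) <> 0) by (apply rp_nz; auto).
  assert (Hn1: rising_prod (x+1) (S n) <> 0) by (apply rp_nz; lra).
  assert (Hd: x + INR (S n) + 1 <> 0) by lra.
  replace (rising_prod (x+1) (S n)) with (rising_prod x (S n) * (x + INR (S n) + 1) / x)
    by (rewrite <- E; field; auto).
  field. repeat split; auto.
Qed.

Lemma ln_le_sub1 y : 0 < y -> ln y <= y - 1.
Proof. intro H. pose proof (exp_ineq1_le (ln y)). rewrite exp_ln in H0; auto; lra. Qed.

Lemma ln_diff_bounds b : 0 < b ->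
  1 / (b+1) <= ln (b+1) - ln b <= 1 / b.
Proof.
  intro H. split.
  - pose proof (ln_le_sub1 (b/(b+1))) as L.
    unfold Rdiv in L. rewrite ln_mult, ln_Rinv in L by (try apply Rinv_0_lt_compat; lra).
    assert (b * / (b+1) - 1 = - (1/(b+1))) by (field; lra).
    assert (0 < b * / (b+1)) by (apply Rmult_lt_0_compat; try apply Rinv_0_lt_compat; lra).
    lra.
  - pose proof (ln_le_sub1 ((b+1)/b)) as L.
    unfold Rdiv in L. rewrite ln_mult, ln_Rinv in L by (try apply Rinv_0_lt_compat; lra).
    assert ((b+1) * / b - 1 = 1/b) by (field; lra).
    assert (0 < (b+1) * / b) by (apply Rmult_lt_0_compat; try apply Rinv_0_lt_compat; lra).
    lra.
Qed.

Lemma gauss_pos x n : 0 < x -> 0 < gauss_seq x n.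
Proof.
  intro H. unfold gauss_seq, Rdiv. apply Rmult_lt_0_compat.
  - apply Rmult_lt_0_compat. unfold Rpower; apply exp_pos. apply lt_0_INR. apply lt_O_fact.
  - apply Rinv_0_lt_compat, rp_pos; auto.
Qed.

Lemma gauss_step x n : 0 < x ->
  gauss_seq x (S n) = gauss_seq x n *
     exp (x * (ln (INR (S n) + 1) - ln (INR (S n)))) * ((INR (S n) + 1) / (x + INR (S n) + 1)).
Proof.
  intro H. unfold gauss_seq. unfold Rpower.
  replace (INR (S (S n))) with (INR (S n) + 1) by (rewrite (S_INR (S n)); ring).
  replace (exp (x * ln (INR (S n) + 1))) with
    (exp (x * ln (INR (S n))) * exp (x * (ln (INR (S n) + 1) - ln (INR (S n))))) by
    (rewrite <- exp_plus; f_equal; ring).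
  replace (fact (S (S n))) with (S (S n) * fact (S n))%nat by reflexivity.
  rewrite mult_INR. replace (INR (S (S n))) with (INR (S n) + 1) by (rewrite (S_INR (S n)); ring).
  cbn [rising_prod]. rewrite (S_INR (S n)).
  pose proof (rp_pos x (S n) H). pose proof (pos_INR (S n)).
  pose proof (rp_pos x n H). field. repeat split; lra.
Qed.

Lemma gauss_conv x : 0 < x -> exists L, 0 < L /\ Un_cv (gauss_seq x) L.
Proof.
  intro Hx.
  set (u := gauss_seq x).
  assert (Hb: forall n, 0 < INR (S n)) by (intro n; apply lt_0_INR; lia).
  assert (Gr: Un_growing u).
  { intro n. unfold u. rewrite gauss_step by auto.
    pose proof (ln_diff_bounds (INR (S n)) (Hb n)) as [L1 L2].
    pose proof (exp_ineq1_le (x * (ln (INR (S n) + 1) - ln (INR (S n))))).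
    pose proof (gauss_pos x n Hx). pose proof (Hb n).
    set (g := gauss_seq x n) in *. set (b := INR (S n)) in *.
    set (d := ln (b + 1) - ln b) in *. set (E := exp (x*d)) in *.
    assert (x * d >= x * (1/(b+1))) by (apply Rle_ge, Rmult_le_compat_l; lra).
    assert (E * ((b+1)/(x+b+1)) >= 1).
    { apply Rle_ge. apply Rle_trans with ((1 + x * (1/(b+1))) * ((b+1)/(x+b+1))).
      - right. field. lra.
      - apply Rmult_le_compat_r. apply Rlt_le, Rdiv_lt_0_compat; lra. lra. }
    assert (HH: g * E * ((b + 1) / (x + b + 1)) = g * (E * ((b + 1) / (x + b + 1)))) by ring.
    rewrite HH. rewrite <- (Rmult_1_r g) at 1. apply Rmult_le_compat_l; lra. }
  set (k := x * (1 + x)).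
  set (w := fun n => u n * exp (k / INR (S n))).
  assert (Wd: forall n, w (S n) <= w n).
  { intro n. unfold w, u. rewrite gauss_step by auto.
    pose proof (ln_diff_bounds (INR (S n)) (Hb n)) as [L1 L2].
    pose proof (gauss_pos x n Hx). pose proof (Hb n).
    replace (INR (S (S n))) with (INR (S n) + 1) by (rewrite (S_INR (S n)); ring).
    set (g := gauss_seq x n) in *. set (b := INR (S n)) in *.
    set (d := ln (b + 1) - ln b) in *.
    assert (A1: exp (x*d) <= exp (x / b)).
    { destruct (Req_dec (x*d) (x/b)) as [e|e]. rewrite e; lra.
      left. apply exp_increasing. assert (x*d <= x*(1/b)) by (apply Rmult_le_compat_l; lra).
      unfold Rdiv in *. lra. }
    assert (A2: (b+1)/(x+b+1) <= exp (- (x/(x+b+1)))).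
    { pose proof (exp_ineq1_le (- (x/(x+b+1)))).
      assert ((b+1)/(x+b+1) = 1 + - (x/(x+b+1))) by (field; lra). lra. }
    assert (A3: x / b - x/(x+b+1) + k / (b+1) <= k / b).
    { unfold k. apply Rminus_le.
      replace (x / b - x / (x + b + 1) + x * (1 + x) / (b + 1) - x * (1 + x) / b)
        with (- (x * (1+x) * x / (b * (x+b+1) * (b+1)))) by (field; lra).
      assert (0 <= x * (1+x) * x / (b * (x+b+1) * (b+1))).
      { apply Rlt_le. apply Rdiv_lt_0_compat. apply Rmult_lt_0_compat; nra. apply Rmult_lt_0_compat; nra. }
      lra. }
    assert (A4: exp (x*d) * ((b+1)/(x+b+1)) * exp (k/(b+1)) <= exp (k / b)).
    { apply Rle_trans with (exp (x/b) * exp (- (x/(x+b+1))) * exp (k/(b+1))).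
      - apply Rmult_le_compat_r. left; apply exp_pos.
        apply Rmult_le_compat; auto. left; apply exp_pos. apply Rlt_le, Rdiv_lt_0_compat; lra.
      - rewrite <- !exp_plus. destruct (Req_dec (x / b + - (x / (x + b + 1)) + k / (b + 1)) (k/b)) as [e|e].
        rewrite e; lra. left; apply exp_increasing. lra. }
    replace (g * exp (x * d) * ((b + 1) / (x + b + 1)) * exp (k / (b + 1)))
      with (g * (exp (x * d) * ((b + 1) / (x + b + 1)) * exp (k / (b + 1)))) by ring.
    apply Rmult_le_compat_l; lra. }
  assert (Ub: forall n, u n <= w O).
  { intro n. apply Rle_trans with (w n).
    - unfold w. pose proof (gauss_pos x n Hx). unfold u.
      assert (1 <= exp (k / INR (S n))).
      { pose proof (exp_ineq1_le (k / INR (S n))).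
        assert (0 <= k / INR (S n)) by (apply Rlt_le, Rdiv_lt_0_compat; [unfold k; nra | apply Hb]).
        lra. }
      nra.
    - induction n. lra. apply Rle_trans with (w n); auto. }
  destruct (growing_cv u Gr) as [L HL].
  { exists (w O). intros y [i ->]. apply Ub. }
  exists L. split; auto.
  pose proof (growing_ineq u L Gr HL O). pose proof (gauss_pos x O Hx). unfold u in *. lra.
Qed.

Lemma lim_ratio a b : Un_cv (fun n => (INR n + a) / (INR n + b)) 1.
Proof.
  apply is_lim_seq_Reals.
  assert (H1: is_lim_seq (fun n => INR n + b) p_infty).
  { eapply is_lim_seq_plus. apply is_lim_seq_INR. apply is_lim_seq_const. simpl. constructor. }
  assert (H2: is_lim_seq (fun n => / (INR n + b)) 0).
  { replace (Finite 0) with (Rbar_inv p_infty) by reflexivity. apply is_lim_seq_inv; auto. discriminate. }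
  assert (H3: is_lim_seq (fun n => 1 + (a - b) * / (INR n + b)) 1).
  { assert (is_lim_seq (fun n => 1 + (a - b) * / (INR n + b)) (1 + (a-b)*0)).
    { apply is_lim_seq_plus'. apply is_lim_seq_const.
      apply is_lim_seq_mult'. apply is_lim_seq_const. auto. }
    replace (1 + (a-b)*0) with 1 in H by ring. auto. }
  eapply is_lim_seq_ext_loc; [|exact H3].
  destruct (INR_unbounded (Rabs b)) as [N HN].
  exists N. intros n Hn. assert (INR N <= INR n) by (apply le_INR; lia).
  assert (INR n + b <> 0) by (pose proof (Rle_abs (-b)); rewrite Rabs_Ropp in *; lra).
  field; auto.
Qed.

Lemma Gamma_conv_pos x : 0 < x -> Un_cv (gauss_seq x) (Gamma x) /\ 0 < Gamma x.
Proof.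
  intro H. destruct (gauss_conv x H) as [L [HL HC]].
  rewrite (Gamma_unique x L HC). auto.
Qed.

Lemma Gamma_rec_pos x : 0 < x -> Gamma (x+1) = x * Gamma x.
Proof.
  intro H. apply Gamma_unique.
  destruct (Gamma_conv_pos x H) as [C _].
  apply is_lim_seq_Reals. apply is_lim_seq_Reals in C.
  pose proof (lim_ratio 1 (x+2)) as R. apply is_lim_seq_Reals in R.
  replace (x * Gamma x) with (Gamma x * x * 1) by ring.
  apply is_lim_seq_ext with (fun n => gauss_seq x n * x * ((INR n + 1) / (INR n + (x+2)))).
  { intro n. rewrite gauss_shift by lra. rewrite S_INR. pose proof (pos_INR n).
    replace (x + (INR n + 1) + 1) with (INR n + (x+2)) by ring. field. lra. }
  apply is_lim_seq_mult'; auto. apply is_lim_seq_mult'; auto. apply is_lim_seq_const.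
Qed.

Lemma Gamma_neg x : -1 < x < 0 -> Un_cv (gauss_seq x) (Gamma x) /\ Gamma (x+1) = x * Gamma x.
Proof.
  intro H.
  assert (Lim: Un_cv (gauss_seq x) (Gamma (x+1) * / x * 1)).
  { destruct (Gamma_conv_pos (x+1)) as [C _]; [lra|].
    apply is_lim_seq_Reals. apply is_lim_seq_Reals in C.
    pose proof (lim_ratio (x+2) 1) as R. apply is_lim_seq_Reals in R.
    apply is_lim_seq_ext with (fun n => gauss_seq (x+1) n * / x * ((INR n + (x+2)) / (INR n + 1))).
    { intro n. rewrite gauss_shift by lra. rewrite S_INR.
      pose proof (pos_INR n). pose proof (gauss_pos (x+1) n).
      field. repeat split; lra. }
    apply is_lim_seq_mult'; auto. apply is_lim_seq_mult'; auto. apply is_lim_seq_const. }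
  pose proof (Gamma_unique _ _ Lim) as E. rewrite E. split; auto.
  field. lra.
Qed.

Lemma Gamma_conv x : -1 < x -> x <> 0 -> Un_cv (gauss_seq x) (Gamma x) /\ Gamma x <> 0.
Proof.
  intros H1 H2. destruct (Rlt_or_le 0 x).
  - destruct (Gamma_conv_pos x) as [A B]; auto. split; auto; lra.
  - destruct (Gamma_neg x) as [A B]; [lra|]. split; auto.
    intro E. destruct (Gamma_conv_pos (x+1)) as [_ P]; [lra|]. rewrite B, E in P. lra.
Qed.

Lemma Gamma_rec x : -1 < x -> x <> 0 -> Gamma (x+1) = x * Gamma x.
Proof.
  intros H1 H2. destruct (Rlt_or_le 0 x).
  - apply Gamma_rec_pos; auto.
  - apply Gamma_neg; lra.
Qed.

Lemma Gamma_1 : Gamma 1 = 1.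
Proof.
  apply Gamma_unique.
  apply Un_cv_ext with (fun n => (INR n + 1) / (INR n + 2)).
  2: apply lim_ratio.
  intro n. unfold gauss_seq. rewrite Rpower_1 by (apply lt_0_INR; lia).
  assert (F: forall m, rising_prod 1 m = INR (fact (S m))).
  { induction m as [|m IH]. simpl. ring.
    cbn [rising_prod]. rewrite IH. replace (fact (S (S m))) with (S (S m) * fact (S m))%nat by reflexivity.
    rewrite mult_INR. rewrite (S_INR (S m)). ring. }
  rewrite F. replace (fact (S (S n))) with (S (S n) * fact (S n))%nat by reflexivity.
  rewrite mult_INR. rewrite !S_INR. pose proof (pos_INR n).
  pose proof (INR_fact_lt_0 (S n)).
  field. lra.
Qed.

Lemma Gamma_nat_shift x m : -1 < x -> x <> 0 ->
  rising_prod x m * Gamma x = Gamma (x + INR m + 1).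
Proof.
  intros H1 H2. induction m as [|m IH].
  - simpl. rewrite Rplus_0_r. rewrite Gamma_rec; auto.
  - cbn [rising_prod]. rewrite Rmult_assoc, (Rmult_comm (x + INR (S m))), <- Rmult_assoc, IH.
    rewrite (S_INR m). pose proof (pos_INR m).
    replace (x + (INR m + 1) + 1) with ((x + INR m + 1) + 1) by ring.
    rewrite (Gamma_rec (x + INR m + 1)) by lra. ring.
Qed.

Lemma Gamma_INR n : Gamma (INR n + 1) = INR (fact n).
Proof.
  induction n as [|n IH].
  - simpl. rewrite Rplus_0_l. apply Gamma_1.
  - rewrite S_INR. pose proof (pos_INR n). rewrite Gamma_rec by lra. rewrite IH.
    replace (fact (S n)) with (S n * fact n)%nat by reflexivity. rewrite mult_INR, S_INR. ring.
Qed.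

Lemma ratio_asym x : -1 < x -> x <> 0 ->
  Un_cv (fun n => Gamma (INR (S n) + x) / Gamma (INR (S n)) / Rpower (INR (S n)) x) 1.
Proof.
  intros H1 H2. destruct (Gamma_conv x H1 H2) as [C NZ].
  apply Un_cv_ext with (fun n => Gamma x / gauss_seq x n * ((INR n + 1) / (INR n + (1 + x)))).
  - intro n. pose proof (pos_INR n).
    assert (Ht: INR (S n) = INR n + 1) by apply S_INR.
    pose proof (Gamma_nat_shift x (S n) H1 H2) as E.
    rewrite Gamma_rec in E by lra.
    replace (x + INR (S n)) with (INR (S n) + x) in E by ring.
    assert (Hr: rising_prod x (S n) <> 0) by (apply rp_nz; auto).
    assert (Hg: Gamma (INR (S n)) = INR (fact n)) by (rewrite Ht; apply Gamma_INR).
    assert (HR: 0 < Rpower (INR (S n)) x) by (unfold Rpower; apply exp_pos).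
    pose proof (INR_fact_lt_0 n).
    unfold gauss_seq. replace (fact (S n)) with (S n * fact n)%nat by reflexivity.
    rewrite mult_INR. rewrite Hg.
    replace (Gamma (INR (S n) + x)) with (rising_prod x (S n) * Gamma x / (INR (S n) + x))
      by (rewrite E; field; lra).
    rewrite Ht in *. field. repeat split; try lra.
  - rewrite <- (Rmult_1_r 1). apply is_lim_seq_Reals.
    apply is_lim_seq_mult'. 2: apply is_lim_seq_Reals, lim_ratio.
    replace 1 with (Gamma x / Gamma x) by (field; auto).
    apply is_lim_seq_div'; auto. apply is_lim_seq_const. apply is_lim_seq_Reals; auto.
Qed.

Lemma Rpower_neg_cv k : 0 < k -> Un_cv (fun n => Rpower (INR (S n)) (- k)) 0.
Proof.
  intros Hk e He.
  destruct (INR_unbounded (Rpower (/ e) (/ k))) as [N HN].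
  exists N. intros n Hn. unfold Rdist. rewrite Rminus_0_r.
  assert (HP: 0 < Rpower (INR (S n)) (-k)) by (unfold Rpower; apply exp_pos).
  rewrite Rabs_pos_eq by lra.
  rewrite Rpower_Ropp.
  assert (INR N <= INR n) by (apply le_INR; lia).
  assert (HA: 0 < Rpower (/ e) (/ k)) by (unfold Rpower; apply exp_pos).
  assert (Hlt: Rpower (Rpower (/ e) (/ k)) k < Rpower (INR (S n)) k).
  { apply Rlt_Rpower_l; auto. rewrite S_INR. lra. }
  rewrite Rpower_mult in Hlt. rewrite Rinv_l in Hlt by lra.
  rewrite Rpower_1 in Hlt by (apply Rinv_0_lt_compat; lra).
  assert (0 < / e) by (apply Rinv_0_lt_compat; lra).
  replace e with (/ / e) by (field; lra).
  apply Rinv_lt_contravar; auto. apply Rmult_lt_0_compat; lra.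
Qed.
Definition W p q r e s t (f : list Z -> R) :=
  sumR (map (fun h => prob p q r e s h * f h) (histories t)).
Definition Nh (h : list Z) := sumR (map (fun a => IZR a ^ 2) h).
Definition vstepZ (a : Z) := a = (-1)%Z \/ a = 0%Z \/ a = 1%Z.

Lemma sumR_app l1 l2 : sumR (l1 ++ l2) = sumR l1 + sumR l2.
Proof. induction l1; simpl; [ring| rewrite IHl1; ring]. Qed.

Lemma sumR_flat_map {A B} (F : B -> R) (g : A -> list B) l :
  sumR (map F (flat_map g l)) = sumR (map (fun x => sumR (map F (g x))) l).
Proof. induction l; simpl; auto. rewrite map_app, sumR_app, IHl. auto. Qed.

Lemma sumR_ext_in {A} (f g : A -> R) l :
  (forall x, In x l -> f x = g x) -> sumR (map f l) = sumR (map g l).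
Proof.
  induction l; simpl; intros; auto. rewrite H by auto. rewrite IHl; auto.
Qed.

Lemma hist_prop t h : In h (histories t) -> length h = t /\ List.Forall vstepZ h.
Proof.
  revert h; induction t; simpl; intros h H.
  - destruct H as [<-|[]]. auto.
  - apply in_flat_map in H as [h0 [H0 H1]]. apply IHt in H0 as [L V].
    simpl in H1. unfold vstepZ.
    destruct H1 as [<-|[<-|[<-|[]]]]; simpl; split; auto.
Qed.

Lemma prob_cons p q r e s b h : h <> [] ->
  prob p q r e s (b :: h) = prob p q r e s h *
     (sumR (map (fun a => K p q r e a b) h) / INR (length h)).
Proof. destruct h; [congruence|reflexivity]. Qed.

Lemma position_cons a h : position (a :: h) = IZR a + position h.
Proof. unfold position. simpl. rewrite plus_IZR. auto. Qed.

Lemma Nh_cons a h : Nh (a :: h) = IZR a ^ 2 + Nh h.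
Proof. reflexivity. Qed.

Lemma Ksums p q r e h : List.Forall vstepZ h ->
  let X := position h in let N := Nh h in let L := INR (length h) in
  sumR (map (fun a => K p q r e a 1%Z) h) = p*(N+X)/2 + q*(N-X)/2 + (L-N)*e/2 /\
  sumR (map (fun a => K p q r e a (-1)%Z) h) = p*(N-X)/2 + q*(N+X)/2 + (L-N)*e/2 /\
  sumR (map (fun a => K p q r e a 0%Z) h) = r*N + (L-N)*(1-e).
Proof.
  induction h as [|a h IH]; intros V X N L.
  - unfold X, N, L, position, Nh; simpl. repeat split; field.
  - inversion V as [|? ? Va Vh]; subst. specialize (IH Vh).
    simpl in IH. destruct IH as [I1 [I2 I3]].
    unfold X, N, L. rewrite position_cons, Nh_cons. cbn [length map sumR]. rewrite S_INR.
    rewrite I1, I2, I3.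
    destruct Va as [ -> | [ -> | -> ] ]; unfold K; simpl; repeat split; field.
Qed.

Lemma W_step p q r e s t f : (1 <= t)%nat ->
  W p q r e s (S t) f = sumR (map (fun h => prob p q r e s h *
     (sumR (map (fun a => K p q r e a (-1)%Z) h) / INR t * f ((-1)%Z :: h) +
      sumR (map (fun a => K p q r e a 0%Z) h) / INR t * f (0%Z :: h) +
      sumR (map (fun a => K p q r e a 1%Z) h) / INR t * f (1%Z :: h))) (histories t)).
Proof.
  intro Ht. unfold W. cbn [histories]. rewrite sumR_flat_map. apply sumR_ext_in.
  intros h Hh. destruct (hist_prop t h Hh) as [L _].
  assert (h <> []) by (intro E; rewrite E in L; simpl in L; lia).
  cbn [map sumR]. rewrite !prob_cons by auto. rewrite L. ring.
Qed.

Lemma sumR_lin {A} (P F G : A -> R) l a b c :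
  sumR (map (fun h => P h * (a * F h + b * G h + c)) l) =
  a * sumR (map (fun h => P h * F h) l) + b * sumR (map (fun h => P h * G h) l) +
  c * sumR (map (fun h => P h * 1) l).
Proof. induction l; simpl; [ring|rewrite IHl; ring]. Qed.

Lemma IZR_m1 : IZR (-1) = -1. Proof. reflexivity. Qed.

Lemma W_rec p q r e s t : (1 <= t)%nat -> p + q + r = 1 ->
  let one := fun _ : list Z => 1 in
  let X2 := fun h => position h ^ 2 in
  W p q r e s (S t) one = W p q r e s t one /\
  W p q r e s (S t) Nh = W p q r e s t Nh * (1 + (1 - r - e) / INR t) + e * W p q r e s t one /\
  W p q r e s (S t) X2 = W p q r e s t X2 * (1 + 2 * (p - q) / INR t)
      + (1 - r - e) / INR t * W p q r e s t Nh + e * W p q r e s t one.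
Proof.
  intros Ht Hpqr one X2.
  assert (Tpos: 0 < INR t) by (apply lt_0_INR; lia).
  assert (Gen: forall (f : list Z -> R) (F G : list Z -> R) a b c,
    (forall h, length h = t -> List.Forall vstepZ h ->
       let X := position h in let N := Nh h in
       (p*(N-X)/2 + q*(N+X)/2 + (INR t-N)*e/2) / INR t * f ((-1)%Z :: h) +
       (r*N + (INR t-N)*(1-e)) / INR t * f (0%Z :: h) +
       (p*(N+X)/2 + q*(N-X)/2 + (INR t-N)*e/2) / INR t * f (1%Z :: h)
       = a * F h + b * G h + c) ->
    W p q r e s (S t) f = a * W p q r e s t F + b * W p q r e s t G + c * W p q r e s t one).
  { intros f F G a b c Hf. rewrite W_step by auto. unfold W, one.
    rewrite <- sumR_lin. apply sumR_ext_in. intros h Hh.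
    destruct (hist_prop t h Hh) as [L V]. f_equal.
    destruct (Ksums p q r e h V) as [K1 [K2 K3]]. rewrite K1, K2, K3.
    rewrite L. apply Hf; auto. }
  split; [|split].
  - rewrite (Gen one one one 1 0 0). ring.
    intros h _ _ X N. unfold one. cbv beta. replace r with (1 - p - q) by lra. field. lra.
  - rewrite (Gen Nh Nh one (1 + (1 - r - e) / INR t) e 0). ring.
    intros h _ _ X N. rewrite !Nh_cons. fold N. unfold one; cbv beta. replace r with (1 - p - q) by lra. field. lra.
  - rewrite (Gen X2 X2 Nh (1 + 2 * (p - q) / INR t) ((1 - r - e) / INR t) e). ring.
    intros h _ _ X N. unfold X2. rewrite !position_cons. fold X. unfold one; cbv beta. try rewrite IZR_m1. simpl.
    change (Nh h) with N. replace r with (1 - p - q) by lra. field. lra.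
Qed.

Lemma W_base p q r e s :
  W p q r e s 1 (fun _ => 1) = 1 /\ W p q r e s 1 Nh = 1 /\ W p q r e s 1 (fun h => position h ^ 2) = 1.
Proof.
  unfold W, Nh, position. simpl. repeat split; ring.
Qed.

Lemma W_one p q r e s t : (1 <= t)%nat -> p + q + r = 1 -> W p q r e s t (fun _ => 1) = 1.
Proof.
  intros Ht H. induction t. lia. destruct t. apply W_base.
  destruct (W_rec p q r e s (S t)) as [A _]; auto; try lia. rewrite A. apply IHt. lia.
Qed.

Lemma cv_const a : Un_cv (fun _ => a) a.
Proof. intros e He; exists O; intros; unfold Rdist; rewrite Rminus_eq_0, Rabs_R0; auto. Qed.

Lemma cv_eq u l l' : l = l' -> Un_cv u l -> Un_cv u l'.
Proof. intros ->; auto. Qed.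

Theorem mainTheorem9 (p q r eps s : R)
  (hp : 0 < p < 1) (hq : 0 < q < 1) (hr : 0 < r < 1) (hpqr : p + q + r = 1)
  (heps : 0 < eps < 1) (hs : 0 < s < 1)
  (hne : eps + r <> 1) (hgamma : p - q = (1 + eps * r) / 2) :
  (forall t : nat, (1 <= t)%nat ->
     EX2 p q r eps s t =
       - INR t / (r * (eps + r))
       - r * Gamma (INR t + 1 - eps - r)
           / ((eps + r) * (eps + r + eps * r) * Gamma (1 - eps - r) * Gamma (INR t))
       + / Gamma (1 + eps * r)
           * (1 / (r * (eps + r)) + r / ((eps + r) * (eps + r + eps * r)))
           * (Gamma (INR t + 1 + eps * r) / Gamma (INR t)))
  /\
  Un_cv (fun t => EX2 p q r eps s t / Rpower (INR t) (1 + eps * r))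
        (/ Gamma (1 + eps * r)
           * (1 / (r * (eps + r)) + r / ((eps + r) * (eps + r + eps * r)))).
Proof.
  set (c := 1 - eps - r). set (d := 1 + eps * r).
  assert (Hc1 : -1 < c) by (unfold c; lra).
  assert (Hc0 : c <> 0) by (unfold c; lra).
  assert (Hd : 0 < eps * r) by nra.
  assert (Hk : 0 < eps + r + eps * r) by lra.
  destruct (Gamma_conv c Hc1 Hc0) as [_ Gc].
  destruct (Gamma_conv_pos d) as [_ Gd]; [unfold d; lra|].
  assert (G0 : forall t, (1 <= t)%nat -> 0 < Gamma (INR t)).
  { intros t Ht. apply Gamma_conv_pos. apply lt_0_INR; lia. }
  assert (T1 : forall t, (1 <= t)%nat -> 1 <= INR t).
  { intros t Ht. replace 1 with (INR 1) by reflexivity. apply le_INR; auto. }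
  assert (R0 : forall t, (1 <= t)%nat -> Gamma (INR (S t)) = INR t * Gamma (INR t)).
  { intros t Ht. rewrite S_INR. apply Gamma_rec; pose proof (T1 t Ht); lra. }
  assert (Rc : forall t, (1 <= t)%nat -> Gamma (INR (S t) + c) = (INR t + c) * Gamma (INR t + c)).
  { intros t Ht. rewrite S_INR. replace (INR t + 1 + c) with ((INR t + c) + 1) by ring.
    apply Gamma_rec; pose proof (T1 t Ht); lra. }
  assert (Rd : forall t, (1 <= t)%nat -> Gamma (INR (S t) + d) = (INR t + d) * Gamma (INR t + d)).
  { intros t Ht. rewrite S_INR. replace (INR t + 1 + d) with ((INR t + d) + 1) by ring.
    apply Gamma_rec; pose proof (T1 t Ht); unfold d in *; lra. }
  assert (B0 : Gamma (INR 1) = 1) by (simpl; apply Gamma_1).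
  assert (Bc : Gamma (INR 1 + c) = c * Gamma c) by (simpl; rewrite Rplus_comm; apply Gamma_rec; auto).
  assert (Bd : Gamma (INR 1 + d) = d * Gamma d) by (simpl; rewrite Rplus_comm; apply Gamma_rec; unfold d; lra).
  set (A := eps / (eps + r)). set (B := r / ((eps + r) * c * Gamma c)).
  assert (HM : forall n, W p q r eps s (S n) Nh =
            A * INR (S n) + B * (Gamma (INR (S n) + c) / Gamma (INR (S n)))).
  { induction n.
    - rewrite (proj1 (proj2 (W_base p q r eps s))). rewrite B0, Bc. unfold A, B. change (INR 1) with 1.
      field. repeat split; auto; lra.
    - destruct (W_rec p q r eps s (S n)) as [_ [E _]]; try lia; auto.
      rewrite E, IHn, W_one by (auto; lia).
      rewrite (R0 (S n)), (Rc (S n)) by lia.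
      assert (T: 1 <= INR (S n)) by (apply T1; lia). assert (G: 0 < Gamma (INR (S n))) by (apply G0; lia).
      rewrite (S_INR (S n)). unfold A, B, c. field. repeat split; try exact Gc; try lra.
      }
  set (K0 := 1 / (r * (eps + r)) + r / ((eps + r) * (eps + r + eps * r))).
  set (V := fun t => - INR t / (r * (eps + r))
       - r * Gamma (INR t + c)
           / ((eps + r) * (eps + r + eps * r) * Gamma c * Gamma (INR t))
       + / Gamma d * K0 * (Gamma (INR t + d) / Gamma (INR t))).
  assert (HV : forall n, EX2 p q r eps s (S n) = V (S n)).
  { change (EX2 p q r eps s) with (fun t => W p q r eps s t (fun h => position h ^ 2)).
    cbv beta. induction n.
    - rewrite (proj2 (proj2 (W_base p q r eps s))). unfold V. rewrite B0, Bc, Bd.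
      change (INR 1) with 1. unfold K0, d, c. field. repeat split; try exact Gc; try (apply Rgt_not_eq; exact Gd); lra.
    - destruct (W_rec p q r eps s (S n)) as [_ [_ E]]; try lia; auto.
      rewrite E, IHn, HM, W_one by (auto; lia). unfold V.
      rewrite (R0 (S n)), (Rc (S n)), (Rd (S n)) by lia.
      assert (T: 1 <= INR (S n)) by (apply T1; lia). assert (G: 0 < Gamma (INR (S n))) by (apply G0; lia).
      rewrite hgamma, (S_INR (S n)). unfold A, B, K0, c, d.
      field. repeat split; try exact Gc; try (apply Rgt_not_eq; exact Gd); lra.
      }
  split.
  - intros t Ht. destruct t; [lia|]. rewrite HV. unfold V.
    replace (INR (S t) + 1 - eps - r) with (INR (S t) + c) by (unfold c; ring).
    replace (INR (S t) + 1 + eps * r) with (INR (S t) + d) by (unfold d; ring).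
    fold c d K0. reflexivity.
  - fold d K0. apply CV_shift with 1%nat.
    set (a := - / (r * (eps + r))).
    set (b := - r / ((eps + r) * (eps + r + eps * r) * Gamma c)).
    apply Un_cv_ext with (fun n => a * Rpower (INR (S n)) (- (eps * r)) +
       b * ((Gamma (INR (S n) + c) / Gamma (INR (S n)) / Rpower (INR (S n)) c)
             * Rpower (INR (S n)) (- (eps + r + eps * r))) +
       / Gamma d * K0 * (Gamma (INR (S n) + d) / Gamma (INR (S n)) / Rpower (INR (S n)) d)).
    + intro n. rewrite Nat.add_1_r. rewrite HV. unfold V.
      set (t := INR (S n)).
      assert (Tp : 0 < t) by (apply lt_0_INR; lia).
      assert (Ed : Rpower t d = t * Rpower t (eps * r))
        by (unfold d; rewrite Rpower_plus, Rpower_1; auto).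
      assert (Ec : Rpower t c = Rpower t (- (eps + r + eps * r)) * Rpower t d).
      { rewrite <- Rpower_plus. f_equal. unfold c, d. ring. }
      assert (P1 : 0 < Rpower t (eps * r)) by (unfold Rpower; apply exp_pos).
      assert (P2 : 0 < Rpower t (- (eps + r + eps * r))) by (unfold Rpower; apply exp_pos).
      assert (P3 : 0 < Rpower t d) by (unfold Rpower; apply exp_pos).
      assert (Gt : 0 < Gamma t) by (apply G0; lia).
      rewrite Rpower_Ropp. rewrite Ec. rewrite Ed in *. unfold a, b.
      field. repeat split; try lra.
    + apply (cv_eq _ (a * 0 + b * (1 * 0) + / Gamma d * K0 * 1)); [ring|].
      apply CV_plus. apply CV_plus.
      * apply CV_mult. apply cv_const.
        apply Rpower_neg_cv; auto.
      * apply CV_mult. apply cv_const.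
        apply CV_mult. apply ratio_asym; auto. apply Rpower_neg_cv; auto.
      * apply CV_mult. apply cv_const.
        apply ratio_asym; unfold d; lra.
Qed.
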